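(* (i) Every twofold partition having a representation in Model $F^{u}$ has a representation in Model $F^{c}$, and there exist a finite product set $X$ and a twofold partition of $X$ (satisfying the standing assumptions) that has a representation in Model $F^{c}$ but none in Model $F^{u}$. (ii) Every twofold partition having a representation in Model $F$ has a representation in Model $E$, and there exist a finite product set $X$ and a twofold partition of $X$ (satisfying the standing assumptions) that has a representation in Model $E$ but none in Model $F$.
   Context: Setting. $N=\{1,\dots,n\}$, $n\ge 2$; $X=X_1\times\dots\times X_n$ with each $X_i$ finite. $(y_i,x_{-i})$ denotes $x$ with $i$-th coordinate replaced by $y_i$. A twofold partition $\langle\mathcal A,\mathcal U\rangle$ of $X$: disjoint, union $X$. Standing assumptions: every attribute $i$ is influential (exist $x_i,y_i,a_{-i}$ with $(x_i,a_{-i})\in\mathcal A$, $(y_i,a_{-i})\in\mathcal U$), and $\succsim_i$ on $X_i$, defined by $x_i\succsim_i y_i$ iff [for all $a_{-i}$, $(y_i,a_{-i})\in\mathcal A\Rightarrow(x_i,a_{-i})\in\mathcal A$], is antisymmetric. Semiorders: a semiorder on $Y$ is a reflexive, Ferrers ($xSy, zSw\Rightarrow xSw$ or $zSy$) and semitransitive ($xSy, ySz\Rightarrow xSw$ or $wSz$) relation; its induced weak order is $x S^{wo} y$ iff for all $z$, [$ySz\Rightarrow xSz$] and [$zSx\Rightarrow zSy$]. Common data of Models $E$ and $F$: for each $i$ a semiorder $S_i$ on $X_i$ (asymmetric part $P_i$) and a semiorder $U_i$ whose asymmetric part $V_i\subseteq P_i$, with $S_i^{wo}\cap U_i^{wo}$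 complete; an up-closed family $\mathcal F\subseteq 2^N$ ($I\in\mathcal F$, $I\subseteq J\Rightarrow J\in\mathcal F$); the relation $xSy$ iff $\{i:x_iS_iy_i\}\in\mathcal F$ and $\{i:y_iV_ix_i\}=\varnothing$, with asymmetric part $P$; a set $\mathcal P\subseteq X$ with no $p,q\in\mathcal P$ satisfying $pPq$. Model $E$: for all $x$, $x\in\mathcal A$ iff [$xSp$ for some $p\in\mathcal P$ and not $qPx$ for all $q\in\mathcal P$]. Model $F$: for all $x$, $x\in\mathcal U$ iff [$pPx$ for some $p\in\mathcal P$ and not $xPq$ for all $q\in\mathcal P$]. $F^{c}$: $F$ with a representation where all $V_i$ are empty; $F^{u}$: $F^{c}$ with a representation where moreover $\mathcal F=\{N\}$. *)

(* Defs.v *)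
From mathcomp Require Import all_boot.
Set Implicit Arguments. Unset Strict Implicit. Unset Printing Implicit Defensive.

(* Attributes N = 'I_n, sets X_i = X i (finite types), X = product. *)
Definition prodX (n : nat) (X : 'I_n -> finType) := forall i : 'I_n, X i.

(* (y_i, x_{-i}) : x with i-th coordinate replaced by y_i *)
Definition upd (n : nat) (X : 'I_n -> finType) (x : prodX X) (i : 'I_n) (y : X i)
  : prodX X :=
  fun j => match i =P j with
           | ReflectT e => eq_rect i (fun k => X k) y j e
           | ReflectF _ => x j
           end.

(* A twofold partition <A, U> of X is given by A; U is its complement. *)
Section Partition.
Variables (n : nat) (X : 'I_n -> finType) (A : prodX X -> Prop).

Definition pref (i : 'I_n) (xi yi : X i) : Prop :=
  forall a : prodX X, A (@upd n X a i yi) -> A (@upd n X a i xi).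

Definition influential (i : 'I_n) : Prop :=
  exists (xi yi : X i) (a : prodX X), A (@upd n X a i xi) /\ ~ A (@upd n X a i yi).

Definition standing_assumptions : Prop :=
  (forall i, influential i) /\
  (forall i (xi yi : X i), pref xi yi -> pref yi xi -> xi = yi).
End Partition.

Section Semiorder.
Variable Y : Type.
Definition asym (S : rel Y) : rel Y := fun x y => S x y && ~~ S y x.
Definition semiorder (S : rel Y) : Prop :=
  [/\ (forall x, S x x),
      (forall x y z w, S x y -> S z w -> S x w \/ S z y) &
      (forall x y z w, S x y -> S y z -> S x w \/ S w z)].
Definition swo (S : rel Y) (x y : Y) : Prop :=
  forall z, (S y z -> S x z) /\ (S z x -> S z y).
End Semiorder.

Section Models.
Variables (n : nat) (X : 'I_n -> finType).

Definition gS (S U : forall i, rel (X i)) (F : pred {set 'I_n}) (x y : prodX X)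
  : bool :=
  F [set i | S i (x i) (y i)] && ([set i | asym (U i) (y i) (x i)] == set0).

Definition gP S U F (x y : prodX X) : bool :=
  gS S U F x y && ~~ gS S U F y x.

Definition common_data (S U : forall i, rel (X i)) (F : pred {set 'I_n})
  (Pset : prodX X -> Prop) : Prop :=
  (forall i, semiorder (S i)) /\
  [/\ (forall i, semiorder (U i)),
      (forall i x y, asym (U i) x y -> asym (S i) x y),
      (forall i (x y : X i),
          (swo (S i) x y /\ swo (U i) x y) \/ (swo (S i) y x /\ swo (U i) y x)),
      (forall I J : {set 'I_n}, F I -> I \subset J -> F J) &
      (forall p q, Pset p -> Pset q -> ~~ gP S U F p q)].

Definition model_E_cond S U F Pset (A : prodX X -> Prop) : Prop :=
  forall x, A x <->
    ((exists p, Pset p /\ gS S U F x p) /\ (forall q, Pset q -> ~~ gP S U F q x)).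

Definition model_F_cond S U F Pset (A : prodX X -> Prop) : Prop :=
  forall x, ~ A x <->
    ((exists p, Pset p /\ gP S U F p x) /\ (forall q, Pset q -> ~~ gP S U F x q)).

Definition rep_E (A : prodX X -> Prop) : Prop :=
  exists S U F Pset, common_data S U F Pset /\ model_E_cond S U F Pset A.

Definition rep_F (A : prodX X -> Prop) : Prop :=
  exists S U F Pset, common_data S U F Pset /\ model_F_cond S U F Pset A.

(* F^c : all V_i empty *)
Definition rep_Fc (A : prodX X -> Prop) : Prop :=
  exists S U F Pset, [/\ common_data S U F Pset,
    (forall i (x y : X i), ~~ asym (U i) x y) & model_F_cond S U F Pset A].

Definition rep_Fu (A : prodX X -> Prop) : Prop :=
  exists S U F Pset, [/\ common_data S U F Pset,
    (forall i (x y : X i), ~~ asym (U i) x y),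
    (forall I : {set 'I_n}, F I = (I == setT)) & model_F_cond S U F Pset A].
End Models.

(* Main.v *)
From Stdlib Require Import Classical ClassicalEpsilon FunctionalExtensionality.
Require Import Defs.
From mathcomp Require Import all_boot.

Unset Printing Implicit Defensive.

Section Gen.
Variables (n : nat) (X : 'I_n -> finType).

Lemma upd_eq (x : prodX X) i (y : X i) : @upd _ _ x i y i = y.
Proof.
rewrite /upd; case: eqP => // e.
by rewrite (eq_irrelevance e erefl).
Qed.

Lemma upd_neq (x : prodX X) i (y : X i) j : i != j -> @upd _ _ x i y j = x j.
Proof. by rewrite /upd; case: eqP. Qed.

Lemma upd_id (x : prodX X) i : @upd _ _ x i (x i) = x.
Proof.
apply: functional_extensionality_dep => j.
rewrite /upd; case: eqP => // e.
by case: j / e.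
Qed.

Definition tob (P : Prop) : bool :=
  if excluded_middle_informative P then true else false.
Lemma tobP (P : Prop) : reflect P (tob P).
Proof. by rewrite /tob; case: excluded_middle_informative => h; constructor. Qed.

Lemma swo_refl (Y : Type) (R : rel Y) x : swo R x x.
Proof. by []. Qed.

Variables (S U : forall i, rel (X i)) (F : pred {set 'I_n}).
Hypothesis Fup : forall I J : {set 'I_n}, F I -> I \subset J -> F J.

Definition geq2 (x y : prodX X) :=
  forall j : 'I_n, swo (S j) (x j) (y j) /\ swo (U j) (x j) (y j).

Lemma gS_mono x y x' y' : geq2 x' x -> geq2 y y' -> gS S U F x y -> gS S U F x' y'.
Proof.
move=> hx hy /andP [hF hV]; apply/andP; split.
  refine (Fup _ _ hF _); apply/subsetP => i; rewrite !inE => h.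
  have [hx1 _] := hx i; have [hy1 _] := hy i.
  have := (hx1 (y i)).1 h => h2.
  exact: (hy1 (x' i)).2 h2.
apply/eqP/setP => i; rewrite !inE.
apply/negP => /andP [h1 h2].
move/eqP/setP: hV => /(_ i); rewrite !inE => hV.
have [_ hx1] := hx i; have [_ hy1] := hy i.
move/negP: hV; apply; apply/andP; split.
  exact: (hx1 (y i)).2 ((hy1 (x' i)).1 h1).
apply/negP => h3; move/negP: h2; apply.
exact: (hy1 (x' i)).2 ((hx1 (y i)).1 h3).
Qed.

Lemma gP_mono x y x' y' : geq2 x' x -> geq2 y y' -> gP S U F x y -> gP S U F x' y'.
Proof.
move=> hx hy /andP [h1 h2]; apply/andP; split; first exact: gS_mono h1.
apply/negP => h3; move/negP: h2; apply; exact: gS_mono h3.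
Qed.

Lemma geq2_refl x : geq2 x x.
Proof. by []. Qed.

Variable (Pset : prodX X -> Prop) (A : prodX X -> Prop).
Hypothesis HF : model_F_cond S U F Pset A.

Lemma F_notA_mono x y : geq2 x y -> ~ A x -> ~ A y.
Proof.
move=> hxy /HF [[p [Pp hp]] hq]; apply/HF; split.
  exists p; split => //; exact: gP_mono hp.
move=> q Pq; apply/negP => h; move/negP: (hq q Pq); apply.
exact: gP_mono h.
Qed.

Lemma F_pref i (a b : X i) :
  swo (S i) a b -> swo (U i) a b -> pref A a b.
Proof.
move=> hS hU z hb; apply: NNPP => ha.
have : ~ A (@upd _ _ z i b).
  apply: F_notA_mono ha => j.
  case: (eqVneq i j) => [<-|ne]; first by rewrite !upd_eq.
  by rewrite !upd_neq.
by [].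
Qed.

End Gen.
Arguments F_pref {n X S U F} Fup {Pset A} HF {i a b}.
Arguments gS_mono {n X S U F} Fup {x y x' y'}.
Arguments gP_mono {n X S U F} Fup {x y x' y'}.
Arguments F_notA_mono {n X S U F} Fup {Pset A} HF {x y}.
Section Econs.
Variables (n : nat) (X : 'I_n -> finType) (A : prodX X -> Prop).
Hypothesis Hcomp : forall i (a b : X i), pref A a b \/ pref A b a.

Lemma pref_refl i (a : X i) : pref A a a.
Proof. by []. Qed.
Lemma pref_trans i (a b c : X i) : pref A a b -> pref A b c -> pref A a c.
Proof. by move=> h1 h2 z /h2 /h1. Qed.

Definition ES (i : 'I_n) : rel (X i) := fun a b => tob (pref A a b).
Definition EU (i : 'I_n) : rel (X i) := fun _ _ => true.
Definition EF : pred {set 'I_n} := fun I => I == setT.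
Definition geqp (x y : prodX X) := forall i, pref A (x i) (y i).
Definition EP (p : prodX X) : Prop :=
  A p /\ forall q, A q -> geqp p q -> geqp q p.

Lemma gSE x y : gS ES EU EF x y <-> geqp x y.
Proof.
rewrite /gS.
have -> : [set i | asym (EU i) (y i) (x i)] == set0.
  by apply/eqP/setP => i; rewrite !inE /asym /EU.
rewrite andbT /EF; split => [/eqP H i | H].
  have : i \in [set i | ES i (x i) (y i)] by rewrite H inE.
  by rewrite inE => /tobP.
by apply/eqP/setP => i; rewrite !inE; apply/tobP.
Qed.

Lemma A_mono x p : geqp x p -> A p -> A x.
Proof.
move=> hxp hp.
pose h k : prodX X := fun j => if (j < k)%N then x j else p j.
suff : forall k, (k <= n)%N -> A (h k).
  move/(_ n (leqnn n)).
  have -> : h n = x.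
    by apply: functional_extensionality_dep => j; rewrite /h ltn_ord.
  by [].
elim => [_|k IH hk].
  have -> : h 0 = p by apply: functional_extensionality_dep => j.
  exact: hp.
have hk' : (k < n)%N by [].
pose i := Ordinal hk'.
have E1 : h k i = p i by rewrite /h /= ltnn.
have E2 := @upd_id _ _ (h k) i.
rewrite E1 in E2.
have E3 : h k.+1 = @upd _ _ (h k) i (x i).
  apply: functional_extensionality_dep => j.
  case: (eqVneq i j) => [<-|ne]; first by rewrite upd_eq /h /= ltnSn.
  rewrite upd_neq // /h ltnS leq_eqVlt.
  have -> : (j == k :> nat) = false.
    by apply/negP => /eqP e; move/negP: ne; apply; apply/eqP/val_inj.
  by [].
rewrite E3; apply: (hxp i); rewrite E2; exact: IH (ltnW hk).
Qed.

Definition rk (x : prodX X) : nat :=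
  \sum_(i < n) #|[set y : X i | tob (pref A (x i) y)]|.

Lemma rk_lt x q i0 : geqp x q -> ~ pref A (q i0) (x i0) -> (rk q < rk x)%N.
Proof.
move=> hxq hn.
have sub : forall i, [set y : X i | tob (pref A (q i) y)] \subset [set y : X i | tob (pref A (x i) y)].
  move=> i; apply/subsetP => y; rewrite !inE => /tobP h; apply/tobP.
  exact: pref_trans (hxq i) h.
rewrite /rk (bigD1 i0) //= [X in (_ < X)%N](bigD1 i0) //=.
rewrite -addSn; apply: leq_add.
- apply: proper_card; rewrite properE sub /=.
  apply/subsetPn; exists (x i0); rewrite !inE; first by apply/tobP.
  by apply/tobP.
- apply: leq_sum => i _; exact: subset_leq_card.
Qed.

Lemma exists_min_aux k x : (rk x <= k)%N -> A x -> exists p, EP p /\ geqp x p.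
Proof.
elim: k x => [|k IH] x hk hx.
  case: (classic (EP x)) => [h|h].
    by exists x; split => // i; apply: pref_refl.
  exfalso; apply: h; split => // q hq hxq i; apply: NNPP => hn.
  have := rk_lt _ _ _ hxq hn; rewrite ltnNge.
  by rewrite (leq_trans hk (leq0n _)).
case: (classic (EP x)) => [h|h].
  by exists x; split => // i; apply: pref_refl.
have [q [hq [hxq [i hn]]]] : exists q, A q /\ geqp x q /\ exists i, ~ pref A (q i) (x i).
  apply: NNPP => hne; apply: h; split => // q hq hxq i; apply: NNPP => hn.
  by apply: hne; exists q; split => //; split => //; exists i.
have hlt := rk_lt _ _ _ hxq hn.
have [p [hp hqp]] := IH q (leq_trans hlt hk) hq.
exists p; split => // j; exact: pref_trans (hxq j) (hqp j).
Qed.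

Lemma exists_min x : A x -> exists p, EP p /\ geqp x p.
Proof. exact: (@exists_min_aux (rk x) x (leqnn _)). Qed.

End Econs.
Arguments gSE {n X A x y}. Arguments exists_min {n X A x}. Arguments A_mono {n X A x p}.
Arguments pref_trans {n X A i a b c}. Arguments pref_refl {n X A i a}.
Arguments ES {n X} A i. Arguments EP {n X} A p.
Lemma rep_E_of_complete n (X : 'I_n -> finType) (A : prodX X -> Prop) :
  (forall i (a b : X i), pref A a b \/ pref A b a) -> rep_E A.
Proof.
move=> Hc.
exists (ES A), (@EU n X), (@EF n), (EP A); split.
  split.
    move=> i; split.
    - by move=> a; apply/tobP.
    - move=> a b c d /tobP h1 /tobP h2.
      case: (Hc i b d) => h.
        by left; apply/tobP; exact: pref_trans h1 h.
      by right; apply/tobP; exact: pref_trans h2 h.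
    - move=> a b c d /tobP h1 /tobP h2.
      case: (Hc i a d) => h.
        by left; apply/tobP.
      by right; apply/tobP; exact: pref_trans h (pref_trans h1 h2).
  split.
  - by move=> i; split => *; rewrite /EU; auto.
  - by move=> i a b; rewrite /asym /EU.
  - move=> i a b; case: (Hc i a b) => h; [left|right]; split => // z; split.
    + by move/tobP => h2; apply/tobP; exact: pref_trans h h2.
    + by move/tobP => h2; apply/tobP; exact: pref_trans h2 h.
    + by move/tobP => h2; apply/tobP; exact: pref_trans h h2.
    + by move/tobP => h2; apply/tobP; exact: pref_trans h2 h.
  - move=> I J; rewrite /EF => /eqP -> hJ; apply/eqP/setP => j.
    by rewrite inE; move/subsetP: hJ => /(_ j); rewrite inE; apply.
  - move=> p q [hp mp] [hq mq]; rewrite /gP; apply/negP => /andP [h1 h2].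
    move/gSE: h1 => h1; move/negP: h2; apply; apply/gSE.
    exact: mp.
move=> x; split.
  move=> hx; split.
    have [p [hp hxp]] := exists_min hx.
    by exists p; split => //; apply/gSE.
  move=> q [hq mq]; apply/negP => /andP [h1 h2].
  move/gSE: h1 => h1; move/negP: h2; apply; apply/gSE.
  exact: mq.
move=> [[p [[hp _] hxp]] _].
apply: (A_mono (p:=p)) => //; exact/gSE.
Qed.

Lemma F_to_E n (X : 'I_n -> finType) (A : prodX X -> Prop) : rep_F A -> rep_E A.
Proof.
move=> [S [U [F [Pset [[hS [hU hVP hsw Fup hPP]] HF]]]]].
apply: rep_E_of_complete => i a b.
case: (hsw i a b) => [[h1 h2]|[h1 h2]]; [left|right];
  exact: (F_pref Fup HF h1 h2).
Qed.
Lemma setT_all (T : finType) (P : pred T) : ([set i | P i] == setT) = [forall i, P i].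
Proof.
apply/eqP/forallP => [H i | H].
  have : i \in [set i | P i] by rewrite H inE.
  by rewrite inE.
by apply/setP => i; rewrite !inE H.
Qed.

Lemma set0_all (T : finType) (P : pred T) : ([set i | P i] == set0) = [forall i, ~~ P i].
Proof.
apply/eqP/forallP => [H i | H].
  have : i \notin [set i | P i] by rewrite H inE.
  by rewrite inE.
by apply/setP => i; rewrite !inE (negbTE (H i)).
Qed.

Definition o0 : 'I_3 := @Ordinal 3 0 isT.
Definition o1 : 'I_3 := @Ordinal 3 1 isT.
Definition o2 : 'I_3 := @Ordinal 3 2 isT.

Lemma I3_cases (i : 'I_3) : [\/ i = o0, i = o1 | i = o2].
Proof.
case: i => [[|[|[|//]]] Hi].
- by apply: Or31; apply/val_inj.
- by apply: Or32; apply/val_inj.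
- by apply: Or33; apply/val_inj.
Qed.

Lemma forall_I3 (P : pred 'I_3) : [forall i, P i] = [&& P o0, P o1 & P o2].
Proof.
apply/forallP/and3P => [H|[h0 h1 h2] i]; first by split; apply: H.
by case: (I3_cases i) => ->.
Qed.

Lemma profile_in_A n (X : 'I_n -> finType) S U F Pset (A : prodX X -> Prop) :
  (forall p q, Pset p -> Pset q -> ~~ gP S U F p q) ->
  model_F_cond S U F Pset A -> forall p, Pset p -> A p.
Proof.
move=> hPP HF p hp; apply: NNPP => hA.
have [[q [hq hqp]] _] := (HF p).1 hA.
by move: (hPP q p hq hp); rewrite hqp.
Qed.

Arguments profile_in_A {n X S U F Pset A}.

Definition Xb : 'I_3 -> finType := fun _ => bool.
Definition mk3 (a b c : bool) : prodX Xb :=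
  fun i => match val i with 0 => a | 1 => b | _ => c end.
Definition Abb (x : prodX Xb) : bool := x o2 && (x o0 || x o1).
Definition Ab (x : prodX Xb) : Prop := Abb x.

Lemma updb (z : prodX Xb) (i : 'I_3) (v : bool) j :
  @upd _ Xb z i v j = if i == j then v else z j.
Proof. by rewrite /upd; case: eqP => // e; case: j / e. Qed.

Lemma Ab_not_pref (i : 'I_3) : ~ @pref _ Xb Ab i false true.
Proof.
move=> h.
case: (I3_cases i) h => -> h.
- move: (h (mk3 false false true)); rewrite /Ab /Abb !updb /mk3 /=; by move/(_ isT).
- move: (h (mk3 false false true)); rewrite /Ab /Abb !updb /mk3 /=; by move/(_ isT).
- move: (h (mk3 true true false)); rewrite /Ab /Abb !updb /mk3 /=; by move/(_ isT).
Qed.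

Lemma Ab_standing : standing_assumptions Ab.
Proof.
split.
  move=> i; exists true, false.
  case: (I3_cases i) => ->.
  - by exists (mk3 false false true); rewrite /Ab /Abb !updb /mk3.
  - by exists (mk3 false false true); rewrite /Ab /Abb !updb /mk3.
  - by exists (mk3 true true false); rewrite /Ab /Abb !updb /mk3.
move=> i [] [] // h1 h2.
  by case: (Ab_not_pref _ h2).
by case: (Ab_not_pref _ h1).
Qed.

Definition FbS (i : 'I_3) : rel (Xb i) := fun a b => b ==> a.
Definition FbU (i : 'I_3) : rel (Xb i) := fun _ _ => true.
Definition FbF : pred {set 'I_3} := fun I => (o2 \in I) && ((o0 \in I) || (o1 \in I)).
Definition topb : prodX Xb := fun _ => true.

Lemma gS_FbU_veto x y : ([set i | asym (FbU i) (y i) (x i)] == set0) = true.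
Proof. by rewrite set0_all; apply/forallP => i; rewrite /asym /FbU. Qed.

Lemma Ab_Fc : rep_Fc Ab.
Proof.
exists FbS, FbU, FbF, (fun p => p = topb).
have gS1 : forall x, gS FbS FbU FbF topb x.
  move=> x; rewrite /gS gS_FbU_veto andbT /FbF !inE /FbS /topb.
  by case: (x o0); case: (x o1); case: (x o2).
have gS2 : forall x, gS FbS FbU FbF x topb = Abb x.
  move=> x; rewrite /gS gS_FbU_veto andbT /FbF !inE /FbS /topb /Abb.
  by case: (x o0); case: (x o1); case: (x o2).
split.
- split.
    move=> i; split; rewrite /FbS; first by case.
      by move=> [] [] [] [] /= h1 h2; try by [left|right].
    by move=> [] [] [] [] /= h1 h2; try by [left|right].
  split.
  + by move=> i; split => *; rewrite /FbU; auto.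
  + by move=> i a b; rewrite /asym /FbU.
  + move=> i a b; case: a; case: b; [left|left|right|left]; split => z;
      by rewrite /FbS /FbU; case: z.
  + move=> I J /andP [h1 h2] /subsetP hs; rewrite /FbF (hs _ h1) /=.
    by case/orP: h2 => h; rewrite (hs _ h) ?orbT.
  + by move=> p q -> ->; rewrite /gP gS1.
- by move=> i a b; rewrite /asym /FbU.
- move=> x; split.
    move=> hA; split.
      by exists topb; split => //; rewrite /gP gS1 gS2 /=; apply/negP.
    by move=> q ->; rewrite /gP gS1 andbF.
  move=> [[p [-> hp]] _]; move: hp; rewrite /gP gS2 => /andP [_ /negP]; done.
Qed.

Lemma Ab_not_Fu : ~ rep_Fu Ab.
Proof.
move=> [S [U [F [Pset [[hS [hU hVP hsw Fup hPP]] hV hF HF]]]]].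
have Utot : forall i (a b : bool), U i a b.
  move=> i a b; have [hr hf _] := hU i.
  case: (hf a a b b (hr a) (hr b)) => h //.
  by move: (hV i b a); rewrite /asym h /= negbK.
have Sval : forall i (a b : bool), S i a b = (b ==> a).
  move=> i a b; have [hr hf _] := hS i.
  have swU : forall a b : bool, swo (U i) a b by move=> a' b' z; split=> _; apply: Utot.
  have nS : ~~ S i false true.
    apply/negP => h.
    apply: (@Ab_not_pref i); apply: (F_pref Fup HF (i:=i)); last by apply: swU.
    case: (hsw i true false) => [[hs _]|[hs _]]; last exact: hs.
    by move=> [] ; split => _ //; apply: hr.
  have Stf : S i true false.
    case: (hf true true false false (hr true) (hr false)) => // h.
    by move: nS; rewrite h.
  by case: a; case: b => /=; [apply: hr | apply: Stf | apply/negbTE | apply: hr].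
have gSE : forall x y, gS S U F x y = [forall i, y i ==> x i].
  move=> x y; rewrite /gS hF setT_all.
  have -> : ([set i | asym (U i) (y i) (x i)] == set0) = true.
    by rewrite set0_all; apply/forallP => i; apply: hV.
  by rewrite andbT; apply: eq_forallb => i; rewrite Sval.
have hA0 : ~ Ab (mk3 true true false) by [].
have [[p [hp hpx]] _] := (HF _).1 hA0.
move: hpx; rewrite /gP !gSE !forall_I3 /= negb_and.
case E0: (p o0); case E1: (p o1); case E2: (p o2) => //= _.
have hA1 : Ab (mk3 false true true) by [].
have hpx1 : gP S U F p (mk3 false true true).
  by rewrite /gP !gSE !forall_I3 /= E0 E1 E2.
case: (classic (exists q, Pset q /\ gP S U F (mk3 false true true) q)).
  move=> [q [hq hxq]].
  move: (hPP p q hp hq); rewrite /gP !gSE !forall_I3 /= E0 E1 E2.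
  move: hxq; rewrite /gP !gSE !forall_I3 /=.
  by case: (q o0); case: (q o1); case: (q o2).
move=> hno; apply: (HF (mk3 false true true)).2 => //; split.
  by exists p.
move=> q hq; apply/negP => h; apply: hno; by exists q.
Qed.
Definition X3 : 'I_3 -> finType := fun _ => 'I_3.
Definition Abn (a b c : nat) : bool :=
  [|| (1 < a) && (1 < b), [&& 1 < a, 0 < b & 0 < c], [&& 0 < a, 0 < b & 1 < c] | (1 < b) && (1 < c)].
Definition A3 (x : prodX X3) : Prop := Abn (x o0 : 'I_3) (x o1 : 'I_3) (x o2 : 'I_3).
Definition mk3n (a b c : 'I_3) : prodX X3 :=
  fun i => match val i with 0 => a | 1 => b | _ => c end.

Lemma updX3 (z : prodX X3) (i : 'I_3) (v : 'I_3) j :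
  @upd _ X3 z i v j = if i == j then v else z j.
Proof. by rewrite /upd; case: eqP => // e; case: j / e. Qed.

Lemma Abn_mono0 a a' b c : a <= a' -> Abn a b c -> Abn a' b c.
Proof.
move=> h; rewrite /Abn => /or4P [/andP [h1 h2]|/and3P [h1 h2 h3]|/and3P [h1 h2 h3]|/andP [h1 h2]];
  apply/or4P.
- by constructor 1; rewrite (leq_trans h1 h) h2.
- by constructor 2; rewrite (leq_trans h1 h) h2 h3.
- by constructor 3; rewrite (leq_trans h1 h) h2 h3.
- by constructor 4; rewrite h1 h2.
Qed.
Lemma Abn_mono1 a b b' c : b <= b' -> Abn a b c -> Abn a b' c.
Proof.
move=> h; rewrite /Abn => /or4P [/andP [h1 h2]|/and3P [h1 h2 h3]|/and3P [h1 h2 h3]|/andP [h1 h2]];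
  apply/or4P.
- by constructor 1; rewrite (leq_trans h2 h) h1.
- by constructor 2; rewrite (leq_trans h2 h) h1 h3.
- by constructor 3; rewrite (leq_trans h2 h) h1 h3.
- by constructor 4; rewrite (leq_trans h1 h) h2.
Qed.
Lemma Abn_mono2 a b c c' : c <= c' -> Abn a b c -> Abn a b c'.
Proof.
move=> h; rewrite /Abn => /or4P [/andP [h1 h2]|/and3P [h1 h2 h3]|/and3P [h1 h2 h3]|/andP [h1 h2]];
  apply/or4P.
- by constructor 1; rewrite h1 h2.
- by constructor 2; rewrite (leq_trans h3 h) h1 h2.
- by constructor 3; rewrite (leq_trans h3 h) h1 h2.
- by constructor 4; rewrite (leq_trans h2 h) h1.
Qed.

Lemma A3_pref_ge i (a b : 'I_3) : (b <= a)%N -> @pref _ X3 A3 i a b.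
Proof.
move=> hab z; rewrite /A3 !updX3.
case: (I3_cases i) => -> /=.
- exact: Abn_mono0.
- exact: Abn_mono1.
- exact: Abn_mono2.
Qed.

Lemma A3_not_pref i (a b : 'I_3) : (a < b)%N -> ~ @pref _ X3 A3 i a b.
Proof.
move=> hab h.
have [w [h1 h2]] : exists w, A3 (@upd _ X3 w i b) /\ ~ A3 (@upd _ X3 w i a).
  move: hab; rewrite /A3.
  case: (I3_cases i) => ->; case: (I3_cases b) => ->; case: (I3_cases a) => -> //= _.
  - by exists (mk3n o0 o1 o2); rewrite !updX3.
  - by exists (mk3n o0 o2 o0); rewrite !updX3.
  - by exists (mk3n o0 o2 o0); rewrite !updX3.
  - by exists (mk3n o2 o0 o1); rewrite !updX3.
  - by exists (mk3n o2 o0 o0); rewrite !updX3.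
  - by exists (mk3n o2 o0 o0); rewrite !updX3.
  - by exists (mk3n o2 o1 o0); rewrite !updX3.
  - by exists (mk3n o0 o2 o0); rewrite !updX3.
  - by exists (mk3n o0 o2 o0); rewrite !updX3.
by apply: h2; apply: h.
Qed.

Lemma A3_standing : standing_assumptions A3.
Proof.
split.
  move=> i; exists o1, o0.
  suff : ~ @pref _ X3 A3 i o0 o1.
    move=> hn; apply: NNPP => hne; apply: hn => z h1; apply: NNPP => h2.
    by apply: hne; exists z.
  exact: A3_not_pref.
move=> i a b h1 h2; apply/val_inj.
case: (ltngtP a b) => // hab.
- by case: (@A3_not_pref i _ _ hab h1).
- by case: (@A3_not_pref i _ _ hab h2).
Qed.

Lemma A3_E : rep_E A3.
Proof.
apply: rep_E_of_complete => i a b.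
case: (leqP b a) => h; [left|right]; apply: A3_pref_ge => //; exact: ltnW.
Qed.
Definition T3 := (nat * nat * nat)%type.
Definition code := (bool * bool * bool * bool * bool * bool)%type.
Fixpoint alll {T} (p : T -> bool) (s : seq T) : bool :=
  if s is x :: s' then (if p x then alll p s' else false) else true.
Fixpoint hasl {T} (p : T -> bool) (s : seq T) : bool :=
  if s is x :: s' then (if p x then true else hasl p s') else false.
Definition relc (s01 s02 s12 : bool) (a b : nat) : bool :=
  match a with
  | 0 => match b with 0 => true | 1 => s01 | _ => s02 end
  | 1 => match b with 0 | 1 => true | _ => s12 end
  | _ => true end.
Definition fsel (f : seq bool) (b0 b1 b2 : bool) : bool :=
  match f with
  | [:: f0; f1; f2; f3; f4; f5; f6; f7] =>
    if b2 then (if b1 then (if b0 then f7 else f6) else (if b0 then f5 else f4))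
    else (if b1 then (if b0 then f3 else f2) else (if b0 then f1 else f0))
  | _ => false end.
Definition cS (c : code) := let: (s01,s02,s12,_,_,_) := c in relc s01 s02 s12.
Definition cU (c : code) := let: (_,_,_,u01,u02,u12) := c in relc u01 u02 u12.
Definition rtab (r : nat -> nat -> bool) : nat -> nat -> bool :=
  let v00 := r 0 0 in let v01 := r 0 1 in let v02 := r 0 2 in
  let v10 := r 1 0 in let v11 := r 1 1 in let v12 := r 1 2 in
  let v20 := r 2 0 in let v21 := r 2 1 in let v22 := r 2 2 in
  fun a b => match a with
  | 0 => match b with 0 => v00 | 1 => v01 | _ => v02 end
  | 1 => match b with 0 => v10 | 1 => v11 | _ => v12 end
  | _ => match b with 0 => v20 | 1 => v21 | _ => v22 end end.
Definition vet (u : nat -> nat -> bool) (a b : nat) := if u b a then ~~ u a b else false.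
Record cfg := Cfg { s0 : nat -> nat -> bool; s1 : nat -> nat -> bool; s2 : nat -> nat -> bool;
  v0 : nat -> nat -> bool; v1 : nat -> nat -> bool; v2 : nat -> nat -> bool; ff : seq bool }.
Definition gSc (k : cfg) (x y : T3) : bool :=
  let: (x0,x1,x2) := x in let: (y0,y1,y2) := y in
  if v0 k x0 y0 then false else if v1 k x1 y1 then false else if v2 k x2 y2 then false else
  fsel (ff k) (s0 k x0 y0) (s1 k x1 y1) (s2 k x2 y2).
Definition gPc k x y := if gSc k x y then ~~ gSc k y x else false.
Definition Apts : seq T3 := [:: (2,2,0); (2,1,1); (2,2,1); (1,1,2); (2,1,2); (0,2,2); (1,2,2); (2,2,2)].
Definition coreU : seq T3 := [:: (2,1,0); (1,2,1); (2,0,2); (0,1,2)].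
Definition coreA : seq T3 := [:: (2,2,0); (2,1,1); (1,1,2); (0,2,2)].
Definition ucond (k : cfg) (Q : seq T3) x :=
  if hasl (fun p => gPc k p x) Q then alll (fun r => ~~ gPc k x r) Q else false.
Definition good (k : cfg) Q :=
  if alll (ucond k Q) coreU then
    (if alll (fun y => ~~ ucond k Q y) coreA then
       alll (fun p => alll (fun q => ~~ gPc k p q) Q) Q else false) else false.
Definition cand (k : cfg) := [seq p <- Apts | alll (fun u => ~~ gPc k u p) coreU].
Fixpoint subseqs (s : seq T3) : seq (seq T3) :=
  match s with [::] => [:: [::]] | x :: s' => let r := subseqs s' in map (cons x) r ++ r end.
Definition feas (k : cfg) :=
  let cd := cand k in
  if alll (fun u => hasl (fun p => gPc k p u) cd) coreU then hasl (good k) (subseqs cd) else false.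
Definition bools := [:: false; true].
Fixpoint allf (k : nat) : seq (seq bool) :=
  match k with 0 => [:: [::]] | k'.+1 => [seq b :: l | b <- bools, l <- allf k'] end.
Definition okc (c : code) : bool :=
  let: (s01,s02,s12,u01,u02,u12) := c in
  [&& s02 ==> s01 && s12, u02 ==> u01 && u12, s01 ==> u01, s02 ==> u02 & s12 ==> u12].
Definition tup (l : seq bool) : code :=
  match l with [:: a; b; c; d; e; g] => (a,b,c,d,e,g) | _ => (false,false,false,false,false,false) end.
Definition allcodes : seq code := [seq tup l | l <- allf 6].
Definition sub3 (i j : nat) : bool :=
  [&& odd i ==> odd j, odd (i %/ 2) ==> odd (j %/ 2) & odd (i %/ 4) ==> odd (j %/ 4)].
Definition upc (f : seq bool) : bool :=
  all (fun i => all (fun j => ~~ sub3 i j || ~~ nth false f i || nth false f j) (iota 0 8)) (iota 0 8).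
Definition codes := [seq c <- allcodes | okc c].
Definition fams := [seq f <- allf 8 | upc f].
Definition mkcfg (c0 c1 c2 : code) (f : seq bool) : cfg :=
  Cfg (rtab (cS c0)) (rtab (cS c1)) (rtab (cS c2))
      (rtab (vet (cU c0))) (rtab (vet (cU c1))) (rtab (vet (cU c2))) f.
Definition bigcheck : bool :=
  alll (fun f => alll (fun c0 => alll (fun c1 => alll (fun c2 => ~~ feas (mkcfg c0 c1 c2 f)) codes) codes) codes) fams.

Lemma bigcheckP : bigcheck = true.
Proof. vm_compute. reflexivity. Qed.

Lemma alllE {T : Type} (p : pred T) s : alll p s = all p s.
Proof. by elim: s => //= x s ->; case: (p x). Qed.
Lemma haslE {T : Type} (p : pred T) s : hasl p s = has p s.
Proof. by elim: s => //= x s ->; case: (p x). Qed.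

Lemma filter_subseqs (a : pred T3) s : filter a s \in subseqs s.
Proof.
elim: s => [|x s IH] /=; first by rewrite inE.
case: (a x); rewrite mem_cat; apply/orP; [left; exact: map_f | right; exact: IH].
Qed.

Lemma mem_allf k l : size l = k -> l \in allf k.
Proof.
elim: k l => [|k IH] [|b l] // [hs].
apply/allpairsP; exists (b, l) => /=; split => //; first by case: b.
exact: IH.
Qed.

Definition tr (x : prodX X3) : T3 :=
  (nat_of_ord (x o0 : 'I_3), nat_of_ord (x o1 : 'I_3), nat_of_ord (x o2 : 'I_3)).
Definition pt (t : T3) : prodX X3 :=
  fun i => (inord (match val i with 0 => t.1.1 | 1 => t.1.2 | _ => t.2 end) : 'I_3).
Definition inr3 (t : T3) := [&& t.1.1 < 3, t.1.2 < 3 & t.2 < 3].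

Lemma pt_tr x : pt (tr x) = x.
Proof.
apply: functional_extensionality_dep => i; rewrite /pt.
by case: (I3_cases i) => -> /=; apply: val_inj; rewrite /= inordK.
Qed.

Lemma tr_pt t : inr3 t -> tr (pt t) = t.
Proof.
case: t => [[a b] c] /and3P /= [ha hb hc].
by rewrite /tr /pt /= !inordK.
Qed.

Arguments tr_pt {t}.

Lemma A3_tr x : A3 x -> tr x \in Apts.
Proof.
rewrite /A3 /tr.
move: (ltn_ord (x o0 : 'I_3)) (ltn_ord (x o1 : 'I_3)) (ltn_ord (x o2 : 'I_3)).
move: (nat_of_ord (x o0 : 'I_3)) (nat_of_ord (x o1 : 'I_3)) (nat_of_ord (x o2 : 'I_3)).
by move=> [|[|[|a]]] [|[|[|b]]] [|[|[|c]]].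
Qed.

Lemma A3_pt t : inr3 t -> A3 (pt t) = Abn t.1.1 t.1.2 t.2.
Proof. move=> h; rewrite /A3; have := tr_pt h; rewrite /tr; case: t h => [[a b] c] _ /= [-> -> ->] //. Qed.

Section Link.
Variables (S U : forall i : 'I_3, rel (X3 i)) (F : pred {set 'I_3}).
Hypothesis Srefl : forall i a, S i a a.
Hypothesis Urefl : forall i a, U i a a.
Hypothesis compat : forall i (a b : 'I_3), (b <= a)%N -> swo (S i) a b /\ swo (U i) a b.

Definition kcode (i : 'I_3) : code :=
  (S i o0 o1, S i o0 o2, S i o1 o2, U i o0 o1, U i o0 o2, U i o1 o2).
Definition setb (b0 b1 b2 : bool) : {set 'I_3} := [set i : 'I_3 | nth false [:: b0; b1; b2] i].
Definition fcode : seq bool :=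
  [:: F (setb false false false); F (setb true false false); F (setb false true false);
      F (setb true true false); F (setb false false true); F (setb true false true);
      F (setb false true true); F (setb true true true)].
Definition kk := mkcfg (kcode o0) (kcode o1) (kcode o2) fcode.

Lemma S_ge i (a b : 'I_3) : (b <= a)%N -> S i a b.
Proof. by move=> h; have [hs _] := compat i a b h; exact: ((hs b).1 (Srefl i b)). Qed.
Lemma U_ge i (a b : 'I_3) : (b <= a)%N -> U i a b.
Proof. by move=> h; have [_ hs] := compat i a b h; exact: ((hs b).1 (Urefl i b)). Qed.

Lemma cS_ok i (a b : 'I_3) : cS (kcode i) a b = S i a b.
Proof.
rewrite /cS /kcode /relc.
by case: (I3_cases a) => ->; case: (I3_cases b) => -> //=; symmetry; apply: S_ge.
Qed.
Lemma cU_ok i (a b : 'I_3) : cU (kcode i) a b = U i a b.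
Proof.
rewrite /cU /kcode /relc.
by case: (I3_cases a) => ->; case: (I3_cases b) => -> //=; symmetry; apply: U_ge.
Qed.

Lemma rtabE r a b : a < 3 -> b < 3 -> rtab r a b = r a b.
Proof. by case: a => [|[|[|a]]] //; case: b => [|[|[|b]]]. Qed.

Lemma fselE b0 b1 b2 : fsel fcode b0 b1 b2 = F (setb b0 b1 b2).
Proof. by case: b0; case: b1; case: b2. Qed.

Lemma gSc_unfold k a b c a' b' c' : gSc k (a,b,c) (a',b',c') =
  [&& ~~ v0 k a a', ~~ v1 k b b', ~~ v2 k c c' & fsel (ff k) (s0 k a a') (s1 k b b') (s2 k c c')].
Proof. by rewrite /gSc; case: (v0 k a a'); case: (v1 k b b'); case: (v2 k c c'). Qed.

Lemma gS_link x y : gS S U F x y = gSc kk (tr x) (tr y).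
Proof.
rewrite /tr gSc_unfold /kk /mkcfg; cbn [s0 s1 s2 v0 v1 v2 ff].
rewrite !rtabE ?ltn_ord // /vet !cU_ok !cS_ok fselE /gS.
have -> : [set i | S i (x i) (y i)] =
   setb (S o0 (x o0) (y o0)) (S o1 (x o1) (y o1)) (S o2 (x o2) (y o2)).
  by apply/setP => i; rewrite !inE; case: (I3_cases i) => ->.
rewrite set0_all forall_I3 /asym.
by case: (U o0 (y o0) (x o0)); case: (U o0 (x o0) (y o0));
   case: (U o1 (y o1) (x o1)); case: (U o1 (x o1) (y o1));
   case: (U o2 (y o2) (x o2)); case: (U o2 (x o2) (y o2)); rewrite /= ?andbF ?andbT.
Qed.

Lemma gP_link x y : gP S U F x y = gPc kk (tr x) (tr y).
Proof. by rewrite /gP /gPc !gS_link; case: (gSc kk (tr x) (tr y)). Qed.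

End Link.

Lemma inr3_tr x : inr3 (tr x).
Proof. by rewrite /inr3 /tr /= !ltn_ord. Qed.

Lemma okc_of (s01 s02 s12 u01 u02 u12 : bool) :
  (s02 -> s01) -> (s02 -> s12) -> (u02 -> u01) -> (u02 -> u12) ->
  (~~ u01 -> ~~ s01) -> (~~ u02 -> ~~ s02) -> (~~ u12 -> ~~ s12) ->
  okc (s01, s02, s12, u01, u02, u12).
Proof.
by case: s01; case: s02; case: s12; case: u01; case: u02; case: u12 => //= h1 h2 h3 h4 h5 h6 h7;
  try (by move: (h1 isT)); try (by move: (h2 isT)); try (by move: (h3 isT)); try (by move: (h4 isT));
  try (by move: (h5 isT)); try (by move: (h6 isT)); try (by move: (h7 isT)).
Qed.

Lemma setb_sub b0 b1 b2 c0 c1 c2 :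
  (b0 ==> c0) -> (b1 ==> c1) -> (b2 ==> c2) -> setb b0 b1 b2 \subset setb c0 c1 c2.
Proof.
move=> h0 h1 h2; apply/subsetP => z; rewrite !inE.
by case: (I3_cases z) => -> /=; apply/implyP.
Qed.

Lemma upc_fcode (F : pred {set 'I_3}) :
  (forall I J : {set 'I_3}, F I -> I \subset J -> F J) -> upc (fcode F).
Proof.
move=> Fup.
rewrite /upc /=.
repeat (apply/andP; split).
all: try by [].
all: case hA: (F _) => //=; apply: (Fup _ _ hA); exact: setb_sub.
Qed.

Lemma feasE k : feas k =
  all (fun u => has (fun p => gPc k p u) (cand k)) coreU && has (good k) (subseqs (cand k)).
Proof.
have e : (fun u => hasl (fun p => gPc k p u) (cand k)) =1 (fun u => has (fun p => gPc k p u) (cand k)).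
  by move=> u; rewrite haslE.
by rewrite /feas alllE (eq_all e) haslE.
Qed.

Lemma ucondE k Q x : ucond k Q x = has (fun p => gPc k p x) Q && all (fun r => ~~ gPc k x r) Q.
Proof. by rewrite /ucond haslE alllE. Qed.

Lemma goodE k Q : good k Q =
  [&& all (ucond k Q) coreU, all (fun y => ~~ ucond k Q y) coreA &
      all (fun p => all (fun q => ~~ gPc k p q) Q) Q].
Proof.
have e : (fun p => alll (fun q => ~~ gPc k p q) Q) =1 (fun p => all (fun q => ~~ gPc k p q) Q).
  by move=> p; rewrite alllE.
by rewrite /good !alllE (eq_all e).
Qed.

Lemma candE k : cand k = [seq p <- Apts | all (fun u => ~~ gPc k u p) coreU].
Proof. by rewrite /cand; apply: eq_filter => p; rewrite alllE. Qed.

Lemma inr3_Apts t : t \in Apts -> inr3 t.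
Proof. by rewrite !inE => /orP [/eqP->|]; do ?[case/orP => [/eqP->|]] => //= /eqP ->. Qed.
Lemma inr3_coreU t : t \in coreU -> inr3 t.
Proof. by rewrite !inE => /orP [/eqP->|]; do ?[case/orP => [/eqP->|]] => //= /eqP ->. Qed.
Lemma inr3_coreA t : t \in coreA -> inr3 t.
Proof. by rewrite !inE => /orP [/eqP->|]; do ?[case/orP => [/eqP->|]] => //= /eqP ->. Qed.
Lemma notA_coreU t : t \in coreU -> ~ A3 (pt t).
Proof.
move=> h; rewrite A3_pt; last exact: inr3_coreU.
by move: h; rewrite !inE => /orP [/eqP->|]; do ?[case/orP => [/eqP->|]] => //= /eqP ->.
Qed.
Lemma A_coreA t : t \in coreA -> A3 (pt t).
Proof.
move=> h; rewrite A3_pt; last exact: inr3_coreA.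
by move: h; rewrite !inE => /orP [/eqP->|]; do ?[case/orP => [/eqP->|]] => //= /eqP ->.
Qed.

Arguments inr3_Apts {t}. Arguments inr3_coreU {t}. Arguments inr3_coreA {t}.
Arguments notA_coreU {t}. Arguments A_coreA {t}.

Lemma A3_not_F : ~ rep_F A3.
Proof.
move=> [S [U [F [Pset [[hS [hU hVP hsw Fup hPP]] HF]]]]].
have Srefl : forall i a, S i a a by move=> i a; have [h _ _] := hS i; exact: h.
have Urefl : forall i a, U i a a by move=> i a; have [h _ _] := hU i; exact: h.
have compat : forall i (a b : 'I_3), (b <= a)%N -> swo (S i) a b /\ swo (U i) a b.
  move=> i a b hab; case: (hsw i a b) => // [[h1 h2]].
  have hp := F_pref Fup HF h1 h2.
  case: (ltnP b a) => hba; first by case: (@A3_not_pref i b a hba hp).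
  have -> : a = b by apply/val_inj/eqP; rewrite eqn_leq hab hba.
  by [].
pose k := kk S U F.
have link : forall x y, gP S U F x y = gPc k (tr x) (tr y).
  by move=> x y; apply: gP_link.
have linkp : forall t t', inr3 t -> inr3 t' -> gPc k t t' = gP S U F (pt t) (pt t').
  by move=> t t' h h'; rewrite link !tr_pt.
have okcode : forall i, kcode S U i \in codes.
  move=> i; rewrite mem_filter; apply/andP; split.
    have [hs1 hu1] := compat i o1 o0 isT.
    have [hs2 hu2] := compat i o2 o1 isT.
    have V01 := hVP i o1 o0; have V02 := hVP i o2 o0; have V12 := hVP i o2 o1.
    rewrite /asym in V01 V02 V12.
    rewrite (@S_ge S U Srefl compat i o1 o0 isT) (@S_ge S U Srefl compat i o2 o0 isT)
            (@S_ge S U Srefl compat i o2 o1 isT) in V01 V02 V12.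
    rewrite (@U_ge S U Urefl compat i o1 o0 isT) (@U_ge S U Urefl compat i o2 o0 isT)
            (@U_ge S U Urefl compat i o2 o1 isT) in V01 V02 V12.
    rewrite /kcode; apply: okc_of.
    - exact: (hs2 o0).2.
    - exact: (hs1 o2).1.
    - exact: (hu2 o0).2.
    - exact: (hu1 o2).1.
    - exact: V01.
    - exact: V02.
    - exact: V12.
  rewrite /allcodes.
  have -> : kcode S U i = tup [:: S i o0 o1; S i o0 o2; S i o1 o2; U i o0 o1; U i o0 o2; U i o1 o2].
    by [].
  by apply: map_f; apply: mem_allf.
have okf : fcode F \in fams.
  rewrite mem_filter upc_fcode //; exact: mem_allf.
have : feas k.
  rewrite feasE.
  have notAU : forall u, u \in coreU -> (exists p, Pset p /\ gP S U F p (pt u)) /\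
                                       (forall q, Pset q -> ~~ gP S U F (pt u) q).
    by move=> u hu; apply: (HF (pt u)).1; apply: notA_coreU.
  have prof_cand : forall p, Pset p -> tr p \in cand k.
    move=> p hp; rewrite candE mem_filter; apply/andP; split; last first.
      by apply: A3_tr; exact: (profile_in_A hPP HF _ hp).
    apply/allP => u hu.
    have := (notAU u hu).2 p hp.
    by rewrite link tr_pt //; apply: inr3_coreU.
  pose Qs := [seq t <- cand k | tob (Pset (pt t))].
  have prof_Qs : forall p, Pset p -> tr p \in Qs.
    move=> p hp; rewrite mem_filter prof_cand // andbT; apply/tobP; by rewrite pt_tr.
  have Qs_prof : forall t, t \in Qs -> Pset (pt t) /\ inr3 t.
    move=> t; rewrite mem_filter => /andP [/tobP h1 h2]; split => //.
    by apply: inr3_Apts; move: h2; rewrite candE mem_filter => /andP [].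
  have hasU : forall u, u \in coreU -> exists2 p, p \in Qs & gPc k p u.
    move=> u hu; have [[p [hp hpu]] _] := notAU u hu.
    exists (tr p); first exact: prof_Qs.
    by rewrite -(tr_pt (inr3_coreU hu)) -link.
  apply/andP; split.
    apply/allP => u hu; have [p hp hpu] := hasU u hu.
    apply/hasP; exists p => //.
    by move: hp; rewrite mem_filter => /andP [].
  apply/hasP; exists Qs; first exact: filter_subseqs.
  rewrite goodE; apply/and3P; split.
  - apply/allP => u hu; rewrite ucondE; apply/andP; split.
      by have [p hp hpu] := hasU u hu; apply/hasP; exists p.
    apply/allP => r hr; have [hr1 hr2] := Qs_prof r hr.
    rewrite linkp //; last exact: inr3_coreU.
    exact: (notAU u hu).2.
  - apply/allP => y hy; apply/negP; rewrite ucondE => /andP [/hasP [p hp hpy] /allP hall].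
    apply: ((HF (pt y)).2 _ (A_coreA hy)); split.
      have [hp1 hp2] := Qs_prof p hp.
      by exists (pt p); split => //; rewrite -linkp //; apply: inr3_coreA.
    move=> q hq; have := hall _ (prof_Qs q hq).
    by rewrite link tr_pt //; apply: inr3_coreA.
  - apply/allP => p hp; apply/allP => q hq.
    have [hp1 hp2] := Qs_prof p hp; have [hq1 hq2] := Qs_prof q hq.
    by rewrite linkp //; apply: hPP.
apply/negP.
have := bigcheckP; rewrite /bigcheck alllE => /allP /(_ _ okf).
rewrite alllE => /allP /(_ _ (okcode o0)).
rewrite alllE => /allP /(_ _ (okcode o1)).
by rewrite alllE => /allP /(_ _ (okcode o2)).
Qed.

Theorem proposition2 :
  ((forall (n : nat) (X : 'I_n -> finType) (A : prodX X -> Prop),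
      2 <= n -> standing_assumptions A -> rep_Fu A -> rep_Fc A) /\
   (exists (n : nat) (X : 'I_n -> finType) (A : prodX X -> Prop),
      [/\ 2 <= n, standing_assumptions A, rep_Fc A & ~ rep_Fu A])) /\
  ((forall (n : nat) (X : 'I_n -> finType) (A : prodX X -> Prop),
      2 <= n -> standing_assumptions A -> rep_F A -> rep_E A) /\
   (exists (n : nat) (X : 'I_n -> finType) (A : prodX X -> Prop),
      [/\ 2 <= n, standing_assumptions A, rep_E A & ~ rep_F A])).
Proof.
split; split.
- move=> n X A _ _ [S [U [F [P [hcd hv _ hm]]]]].
  by exists S, U, F, P; split.
- exists 3, Xb, Ab; split => //.
  + exact: Ab_standing.
  + exact: Ab_Fc.
  + exact: Ab_not_Fu.
- move=> n X A _ _; exact: F_to_E.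
- exists 3, X3, A3; split => //.
  + exact: A3_standing.
  + exact: A3_E.
  + exact: A3_not_F.
Qed.
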